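(* Consider the packet erasure broadcast model below with $n\ge 1$ receivers, operated under Algorithm 1 (drop when decoded), and assume $\lambda<\mu$. Then the expected size of the sender's physical queue in steady state is $\Omega\left(\frac{1}{(1-\rho)^2}\right)$ as $\rho=\lambda/\mu\to 1^-$, where $\lambda,\mu\in(0,1)$ and one of $\lambda,\mu$ is held fixed while the other varies so that $\rho$ increases to $1$.
   Context: Model: a sender broadcasts a stream of packets to $n$ receivers. Packets are fixed-length vectors over a finite field $\mathbb{F}_q$; the $k$-th packet to arrive at the sender is $\mathbf{p}_k$. Time is slotted. In each slot one new packet arrives at the sender with probability $\lambda$, independently across slots, just after the beginning of the slot. The sender has an unbounded queue (the physical queue); in each slot it may transmit one linear combination of the packets in its queue, whose coefficient vector with respect to the original packets is carried in the header. Each receiver independently receives the transmission with probability $\mu$ and otherwise suffers a (detectable) erasure; erasures are independent across receivers and slots. Feedback is perfect and reaches the sender before the end of the slot; packets are dropped from the queue just before the end of the slot; queue sizes are measured at the end of the slot. The load factor is $\rho=\lambda/\mu$. The knowledge space of a node is the space of coefficient vectors (with respect to the packets arrived so far) of linear combinations of packets it can compute; the sender's knowledge space after $A$ arrivals is $\mathbb{F}_q^A$. The virtual queue of receiver $j$ has size equal to the dimension of the sender's knowledge space minus that of receiver $j$'s. Algorithm 1: in each slot the sender transmits a random linear combination of all packets currently in its queue; the field is assumed large enough that every transmission is innovative (lies outside the knowledge space) for every receiver whose knowledge space differs from the sender's. A receiver reports decoding to the sender, and the sender regards a receiver as having decoded the packets only at times when that receiver's virtual queue becomes empty (earlier decodings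 are ignored). The sender drops a packet from its queue once all receivers have decoded it in this sense. *)

(* Defs.v *)
From HB Require Import structures.
From mathcomp Require Import all_boot all_order all_algebra.
From mathcomp Require Import reals.
Set Implicit Arguments. Unset Strict Implicit. Unset Printing Implicit Defensive.
Import Order.TTheory GRing.Theory Num.Theory.

Section Model.
Variable n : nat.

(* Random outcome of one slot: (new arrival?, which receivers got the
   transmission). *)
Definition slot : finType := (bool * {ffun 'I_n -> bool})%type.

(* System state at the end of a slot:
   - arrivals  = A, the number of packets arrived so far (the sender's
                 knowledge space is F_q^A);
   - vq j      = size of receiver j's virtual queue
                 = A - dim(knowledge space of receiver j);
   - decoded j = the number of packets the sender regards receiver j as
                 having decoded: the value of A at the last slot end at which
                 receiver j's virtual queue was empty (0 initially). *)
Record state := State {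
  arrivals : nat;
  vq : {ffun 'I_n -> nat};
  decoded : {ffun 'I_n -> nat} }.

Definition init_state : state := State 0 [ffun => 0%N] [ffun => 0%N].

(* The arrival happens at the beginning of the slot, so it can be
   part of the transmitted combination.  Since every transmission is
   innovative for every receiver whose knowledge space differs from the
   sender's, receiver j's knowledge dimension grows by one iff it receives
   the packet and its virtual queue (after the arrival) is nonempty. *)
Definition step (s : state) (w : slot) : state :=
  let A' := (arrivals s + w.1)%N in
  let Q' := [ffun j => if (0 < vq s j + w.1)%N && w.2 j
                       then (vq s j + w.1).-1 else (vq s j + w.1)%N] in
  let D' := [ffun j => if Q' j == 0%N then A' else decoded s j] in
  State A' Q' D'.

Definition run (t : nat) (om : {ffun 'I_t -> slot}) : state :=
  foldl step init_state [seq om i | i <- enum 'I_t].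

(* Packet k (1-based) is dropped once every receiver j has decoded it in the
   sender's sense, i.e. k <= decoded j for all j.  Hence the physical queue
   holds the packets k with min_j decoded j < k <= A. *)
Definition phys_queue (s : state) : nat :=
  (arrivals s - \big[minn/arrivals s]_(j < n) decoded s j)%N.

Variable R : realType.
Local Open Scope ring_scope.

Definition slot_prob (lam mu : R) (w : slot) : R :=
  (if w.1 then lam else 1 - lam) *
  \prod_(j < n) (if w.2 j then mu else 1 - mu).

Definition path_prob (lam mu : R) (t : nat) (om : {ffun 'I_t -> slot}) : R :=
  \prod_(i < t) slot_prob lam mu (om i).

Definition expected_queue (lam mu : R) (t : nat) : R :=
  \sum_(om : {ffun 'I_t -> slot}) path_prob lam mu om * (phys_queue (run om))%:R.

End Model.

(* Main.v *)
Require Import Defs.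
From HB Require Import structures.
From mathcomp Require Import all_boot all_order all_algebra.
From mathcomp Require Import reals.
From mathcomp Require Import ring lra zify.
Import Order.TTheory GRing.Theory Num.Theory.
Local Open Scope ring_scope.
Set Implicit Arguments. Unset Strict Implicit. Unset Printing Implicit Defensive.

Section Link.
Variable n : nat.
Variable R : realType.

Definition ext t (om : {ffun 'I_t -> slot n}) (w : slot n) : {ffun 'I_t.+1 -> slot n} :=
  [ffun i => oapp om w (insub (val i))].
Definition restr t (f : {ffun 'I_t.+1 -> slot n}) : {ffun 'I_t -> slot n} :=
  [ffun i => f (widen_ord (leqnSn t) i)].

Lemma ext_widen t om w (i : 'I_t) : ext om w (widen_ord (leqnSn t) i) = om i.
Proof. by rewrite ffunE /= (valK i). Qed.

Lemma ext_max t om w : ext (t:=t) om w ord_max = w.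
Proof. by rewrite ffunE /= insubN // ltnn. Qed.

Lemma ext_restr t (f : {ffun 'I_t.+1 -> slot n}) : ext (restr f) (f ord_max) = f.
Proof.
apply/ffunP=> i; rewrite ffunE; case: insubP => [j /= _ ej|].
  by rewrite ffunE; congr (f _); apply: val_inj; rewrite /= ej.
rewrite -leqNgt => hi; congr (f _); apply: val_inj => /=.
by apply/eqP; rewrite eqn_leq hi -ltnS ltn_ord.
Qed.

Lemma restr_ext t om w : restr (ext (t:=t) om w) = om.
Proof. by apply/ffunP=> i; rewrite ffunE ext_widen. Qed.

Lemma sum_split t (F : {ffun 'I_t.+1 -> slot n} -> R) :
  \sum_f F f = \sum_(om : {ffun 'I_t -> slot n}) \sum_(w : slot n) F (ext om w).
Proof.
rewrite pair_bigA /=.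
rewrite (reindex (fun p : {ffun 'I_t -> slot n} * slot n => ext p.1 p.2)) //=.
exists (fun f => (restr f, f ord_max)) => [p _|f _] /=.
  by rewrite restr_ext ext_max; case: p.
by rewrite ext_restr.
Qed.

Lemma run_ext t om w : run (ext (t:=t) om w) = step (run om) w.
Proof.
rewrite /run enum_ordSr map_rcons -map_comp foldl_rcons ext_max; congr (step (foldl _ _ _) _).
by apply: eq_map => i /=; rewrite ext_widen.
Qed.

Lemma path_prob_ext (l m : R) t om w :
  path_prob l m (ext (t:=t) om w) = path_prob l m om * slot_prob l m w.
Proof.
by rewrite /path_prob big_ord_recr ext_max; congr (_ * _); apply: eq_bigr => i _; rewrite ext_widen.
Qed.

End Link.

Section Red.
Variable R : realType.

Definition rstep (z : nat * nat) (a r : bool) : nat * nat :=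
  let y := (z.1 + a)%N in
  let x' := if (0 < y)%N && r then y.-1 else y in
  (x', if x' == 0%N then 0%N else (z.2 + a)%N).

Definition wt (l : R) (a : bool) : R := if a then l else 1 - l.

Definition Pr (l m : R) (g : nat * nat -> R) (z : nat * nat) : R :=
  \sum_(a : bool) \sum_(r : bool) wt l a * wt m r * g (rstep z a r).

Variable n : nat.
Variable j0 : 'I_n.

Definition proj (s : state n) : nat * nat := (vq s j0, (arrivals s - decoded s j0)%N).

Lemma proj_step s w : (decoded s j0 <= arrivals s)%N ->
  proj (step s w) = rstep (proj s) w.1 (w.2 j0).
Proof.
move=> hD; rewrite /proj /step /rstep /= !ffunE /=.
by case: ifP => _ /=; case: ifP => _ //; rewrite ?subnn ?addnBAC.
Qed.

Lemma marg (l m : R) (h : bool -> bool -> R) :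
  \sum_(w : slot n) slot_prob l m w * h w.1 (w.2 j0) =
  \sum_(a : bool) \sum_(r : bool) wt l a * wt m r * h a r.
Proof.
rewrite -(pair_bigA _ (fun (a : bool) (f : {ffun 'I_n -> bool}) =>
   slot_prob l m (a, f) * h a (f j0))) /=.
apply: eq_bigr => a _.
have -> : \sum_(r : bool) wt l a * wt m r * h a r =
  wt l a * \prod_(i < n) \sum_(r : bool) (wt m r * (if i == j0 then h a r else 1)).
  rewrite [in RHS](bigD1 j0) //= [X in _ * (_ * X)]big1 ?mulr1; last first.
    move=> i /negbTE ->; rewrite big_bool /wt /=; lra.
  by rewrite mulr_sumr; apply: eq_bigr => r _; rewrite eqxx mulrA.
rewrite bigA_distr_bigA mulr_sumr; apply: eq_bigr => f _.
rewrite /slot_prob /= -mulrA; congr (_ * _).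
rewrite big_split /=; congr (_ * _).
rewrite (bigD1 j0) //= eqxx big1 ?mulr1 //.
by move=> i /negbTE ->.
Qed.

Lemma inv_run t (om : {ffun 'I_t -> slot n}) :
  (decoded (run om) j0 <= arrivals (run om))%N.
Proof.
elim: t om => [|t IH] om.
  by rewrite /run enum_ord0 /= ffunE.
rewrite -(ext_restr om) run_ext /step /= ffunE.
case: ifP => _ //; exact: leq_trans (IH _) (leq_addr _ _).
Qed.

Lemma link (l m : R) t (g : nat * nat -> R) :
  \sum_(om : {ffun 'I_t -> slot n}) path_prob l m om * g (proj (run om)) =
  iter t (Pr l m) g (0, 0)%N.
Proof.
elim: t g => [|t IH] g.
  rewrite (eq_bigr (fun _ => g (0,0)%N)); last first.
    by move=> om _; rewrite /path_prob big_ord0 mul1r /run enum_ord0 /= /proj /= ffunE.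
  by rewrite sumr_const card_ffun card_ord expn0.
rewrite iterSr -IH sum_split; apply: eq_bigr => om _.
rewrite /Pr -(marg l m (fun a r => g (rstep (proj (run om)) a r))) mulr_sumr.
apply: eq_bigr => w _.
by rewrite path_prob_ext run_ext proj_step ?inv_run // mulrA.
Qed.

End Red.

Section Chain.
Variable R : realType.
Variables l m : R.
Hypothesis hl : 0 <= l <= 1.
Hypothesis hm : 0 <= m <= 1.

Local Notation P := (Pr l m).

Definition RI (z : nat * nat) : bool :=
  (z.1 <= z.2)%N && ((z.1 == 0)%N ==> (z.2 == 0)%N).

Lemma RI_step z a r : RI z -> RI (rstep z a r).
Proof.
case: z => x b; rewrite /RI /rstep /= => /andP[h1 /implyP h2].
case: a; case: r; case: x h1 h2 => [|x] h1 h2 /=;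
 rewrite ?addn0 ?addn1 //= ?andbT; try lia.
case: ifP => [/eqP -> //|e] /=; rewrite ?e /= ?andbT; lia.
Qed.

Lemma wt_ge0 (u : R) a : 0 <= u <= 1 -> 0 <= wt u a.
Proof. by case: a => /andP[h1 h2] /=; lra. Qed.

Lemma Pr_ext f g z : (forall z, f z = g z) -> P f z = P g z.
Proof. by move=> e; apply: eq_bigr => a _; apply: eq_bigr => r _; rewrite e. Qed.

Lemma Pr_lin (c1 c2 : R) f g z :
  P (fun z => c1 * f z + c2 * g z) z = c1 * P f z + c2 * P g z.
Proof.
rewrite /Pr !mulr_sumr -big_split; apply: eq_bigr => a _.
rewrite !mulr_sumr -big_split; apply: eq_bigr => r _ /=; ring.
Qed.

Lemma Pr_const c z : P (fun _ => c) z = c.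
Proof. rewrite /Pr !big_bool /wt /=; ring. Qed.

Lemma Pr_mono f g z : (forall z, RI z -> f z <= g z) -> RI z -> P f z <= P g z.
Proof.
move=> fg hz; apply: ler_sum => a _; apply: ler_sum => r _.
apply: ler_wpM2l; first by apply: mulr_ge0; apply: wt_ge0.
by apply: fg; apply: RI_step.
Qed.

Lemma iter_lin t (c1 c2 : R) f g z :
  iter t P (fun z => c1 * f z + c2 * g z) z = c1 * iter t P f z + c2 * iter t P g z.
Proof.
elim: t z => [//|t IH] z; rewrite !iterS.
by rewrite (Pr_ext _ IH) Pr_lin.
Qed.

Lemma iter_ext t f g z : (forall z, f z = g z) -> iter t P f z = iter t P g z.
Proof.
move=> e; elim: t z => [|t IH] z; first exact: e.
by rewrite !iterS; apply: Pr_ext.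
Qed.

Lemma iter_const t c z : iter t P (fun _ => c) z = c.
Proof.
elim: t z => [//|t IH] z; rewrite iterS.
by rewrite (Pr_ext _ IH) Pr_const.
Qed.

Lemma iter_mono t f g z : (forall z, RI z -> f z <= g z) -> RI z ->
  iter t P f z <= iter t P g z.
Proof.
move=> fg; elim: t z => [|t IH] z hz; first exact: fg.
rewrite !iterS; apply: Pr_mono => // ? ?; exact: IH.
Qed.

Definition EE t g := iter t P g (0, 0)%N.

Lemma RI0 : RI (0, 0)%N. Proof. by []. Qed.

Lemma EE_mono t f g : (forall z, RI z -> f z <= g z) -> EE t f <= EE t g.
Proof. by move=> fg; apply: iter_mono. Qed.

Lemma EE_lin t c1 c2 f g :
  EE t (fun z => c1 * f z + c2 * g z) = c1 * EE t f + c2 * EE t g.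
Proof. exact: iter_lin. Qed.

Lemma EE_tele t g :
  EE t g = g (0, 0)%N + \sum_(s < t) EE s (fun z => P g z - g z).
Proof.
elim: t => [|t IH]; first by rewrite big_ord0 addr0.
rewrite big_ord_recr /= addrA -IH /EE iterSr.
have := iter_lin t 1 1 g (fun z => P g z - g z) (0,0)%N.
rewrite !mul1r => <-; apply: iter_ext => z; ring.
Qed.

Definition monof (f : nat * nat -> R) :=
  forall x1 b1 x2 b2, (x1 <= x2)%N -> (b1 <= b2)%N -> f (x1, b1) <= f (x2, b2).

Lemma rstep1 z a r : (rstep z a r).1 = (z.1 + a - r)%N.
Proof. by rewrite /rstep /=; case: r; case: (z.1 + a)%N => [|k] //=; rewrite ?subn1 ?subn0. Qed.

Lemma rstep2 z a r : (rstep z a r).2 =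
  if (rstep z a r).1 == 0%N then 0%N else (z.2 + a)%N.
Proof. by []. Qed.

Lemma rstep_mono x1 b1 x2 b2 a r : (x1 <= x2)%N -> (b1 <= b2)%N ->
  ((rstep (x1, b1) a r).1 <= (rstep (x2, b2) a r).1)%N /\
  ((rstep (x1, b1) a r).2 <= (rstep (x2, b2) a r).2)%N.
Proof.
move=> h1 h2; have e1 : ((rstep (x1, b1) a r).1 <= (rstep (x2, b2) a r).1)%N.
  by rewrite !rstep1 /= leq_sub2r // leq_add2r.
split=> //; rewrite !rstep2.
have [E|ne] := eqVneq (rstep (x2, b2) a r).1 0%N.
  by move: e1; rewrite E leqn0 => ->.
case: ifP => _ //; by rewrite /= leq_add2r.
Qed.

Lemma Pr_monof f : monof f -> monof (P f).
Proof.
move=> hf x1 b1 x2 b2 h1 h2; apply: ler_sum => a _; apply: ler_sum => r _.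
apply: ler_wpM2l; first by apply: mulr_ge0; apply: wt_ge0.
have [e1 e2] := rstep_mono a r h1 h2.
move: e1 e2; case: (rstep (x1, b1) a r) => ? ?; case: (rstep (x2, b2) a r) => ? ? /=.
exact: hf.
Qed.

Lemma iter_monof t f : monof f -> monof (iter t P f).
Proof. by move=> hf; elim: t => [//|t IH]; rewrite iterS; apply: Pr_monof. Qed.

Lemma EE_incr t g : monof g -> EE t g <= EE t.+1 g.
Proof.
move=> hg; rewrite /EE iterS.
rewrite -{1}(Pr_const (iter t P g (0, 0)%N) (0, 0)%N).
apply: Pr_mono => // -[x b] _; apply: iter_monof => //.
Qed.

Lemma EE_incr_le s t g : monof g -> (s <= t)%N -> EE s g <= EE t g.
Proof.
move=> hg; elim: t => [|t IH]; first by rewrite leqn0 => /eqP ->.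
rewrite leq_eqVlt => /orP[/eqP -> //|]; rewrite ltnS => /IH h.
exact: le_trans h (EE_incr _ hg).
Qed.

Lemma EE_sum_le t g : monof g -> \sum_(s < t) EE s g <= t%:R * EE t g.
Proof.
move=> hg; elim: t => [|t IH]; first by rewrite big_ord0 mul0r.
rewrite big_ord_recr /= -natr1 mulrDl mul1r.
have h := EE_incr t hg.
apply: lerD => //; apply: le_trans IH _; apply: ler_wpM2l => //.
Qed.

End Chain.

Section Drift.
Variable R : realType.
Variables l m : R.
Hypothesis hl0 : 0 < l.
Hypothesis hlm : l < m.
Hypothesis hm1 : m < 1.

Definition pp := l * (1 - m).
Definition qq := m * (1 - l).
Definition th := pp / qq.
Definition Gf (x : nat) : R := (1 - th ^+ x) * (qq / (qq - pp)).
Definition ga := l * pp * qq / ((qq - pp) * (pp + qq)).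
Definition C1 := (qq ^+ 2 - pp ^+ 2) / qq.
Definition Wf (z : nat * nat) : R :=
  z.2%:R * Gf z.1 + ga * (qq / (pp * (qq - pp))) * z.1%:R - ga / (qq - pp) * Gf z.1.

Ltac prep := have := hl0; have := hlm; have := hm1; move=> ? ? ?.
Lemma pp_gt0 : 0 < pp. Proof. prep; rewrite /pp; apply: mulr_gt0; lra. Qed.
Lemma qq_gt0 : 0 < qq. Proof. prep; rewrite /qq; apply: mulr_gt0; lra. Qed.
Lemma d_eq : qq - pp = m - l. Proof. rewrite /qq /pp; ring. Qed.
Lemma d_gt0 : 0 < qq - pp. Proof. prep; rewrite d_eq; lra. Qed.
Lemma th_ge0 : 0 <= th. Proof. by rewrite /th divr_ge0 // ltW // ?pp_gt0 ?qq_gt0. Qed.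
Lemma th_le1 : th <= 1.
Proof. rewrite /th ler_pdivrMr ?qq_gt0 // mul1r; have := d_gt0; lra. Qed.

Lemma Gf0 : Gf 0 = 0. Proof. by rewrite /Gf expr0 subrr mul0r. Qed.

Ltac nz := repeat (apply/andP; split); apply/eqP => E; nra.

Lemma Gf1 : Gf 1 = 1.
Proof.
have hq := qq_gt0; have hd := d_gt0.
rewrite /Gf /th expr1; field.
by apply/andP; split; apply: lt0r_neq0.
Qed.

Lemma Wdown x0 b : Wf (x0, if x0 == 0%N then 0%N else b) = Wf (x0, b).
Proof. by case: x0 => [|x0] //=; rewrite /Wf /= Gf0 !mulr0. Qed.

Lemma drift z : RI z -> ga - C1 * z.2%:R <= Pr l m Wf z - Wf z.
Proof.
have hp := pp_gt0; have hq := qq_gt0; have hd := d_gt0.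
prep; rewrite /pp /qq in hp hq hd.
case: z => [[|x0] b] /=.
  rewrite /RI /= => /eqP -> /=.
  rewrite /Pr !big_bool /rstep /= /Wf /= !Gf0 add0n Gf1 -subr_ge0.
  set e := (X in 0 <= X).
  have -> : e = pp.
 rewrite /e /ga /C1 /pp /qq; field; nz.
  rewrite /pp; nra.
move=> _; rewrite /Pr !big_bool /rstep /= ?addn0 ?addn1 /=.
rewrite Wdown /Wf /= /Gf !exprS.
set y := th ^+ x0.
rewrite -?natr1 ?natrD.
have -> : (if x0 == 0%N then 0%N else b)%:R * ((1 - y) * (qq / (qq - pp))) =
          b%:R * ((1 - y) * (qq / (qq - pp))).
  rewrite /y; clear y; case: x0 => [|x0] //=; by rewrite expr0 subrr !mul0r mulr0.
have hy0 : 0 <= y by rewrite /y exprn_ge0 // th_ge0.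
have hy1 : y <= 1 by rewrite /y exprn_ile1 // ?th_ge0 ?th_le1.
have hC : 0 <= C1.
  rewrite /C1 divr_ge0 // ?ltW //; have := pp_gt0; have := qq_gt0; have := d_gt0.
  move=> *; nra.
have ht := th_ge0; have hp' := pp_gt0.
rewrite -subr_ge0; set e := (X in 0 <= X).
have -> : e = b%:R * C1 * (1 - y) + pp * y * th.
  rewrite /e /ga /C1 /th /pp /qq; field; nz.
have hb : 0 <= b%:R :> R by [].
apply: addr_ge0; apply: mulr_ge0 => //; try apply: mulr_ge0 => //; try lra.
Qed.

Definition bfn (z : nat * nat) : R := z.2%:R.
Definition Mw := qq / (qq - pp) + ga * (qq / (pp * (qq - pp))).

Lemma bfn_mono : monof bfn.
Proof. by move=> x1 b1 x2 b2 _ h; rewrite /bfn ler_nat. Qed.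

Lemma ga_gt0 : 0 < ga.
Proof.
have hp := pp_gt0; have hq := qq_gt0; have hd := d_gt0; prep.
rewrite /ga; apply: divr_gt0; apply: mulr_gt0 => //; try apply: mulr_gt0 => //; lra.
Qed.

Lemma C1_gt0 : 0 < C1.
Proof.
have hp := pp_gt0; have hq := qq_gt0; have hd := d_gt0.
rewrite /C1 divr_gt0 //; nra.
Qed.

Lemma Gf_ge0 x : 0 <= Gf x.
Proof.
have hq := qq_gt0; have hd := d_gt0.
rewrite /Gf; apply: mulr_ge0; last by rewrite divr_ge0 ?ltW.
by rewrite subr_ge0 exprn_ile1 // ?th_ge0 ?th_le1.
Qed.

Lemma Gf_le x : Gf x <= qq / (qq - pp).
Proof.
have hq := qq_gt0; have hd := d_gt0.
rewrite /Gf; apply: ler_piMl; first by rewrite divr_ge0 ?ltW.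
have := exprn_ge0 x th_ge0; lra.
Qed.

Lemma W_le z : RI z -> Wf z <= Mw * bfn z + 0 * bfn z.
Proof.
have hq := qq_gt0; have hd := d_gt0; have hp := pp_gt0; have hg := ga_gt0.
case: z => x b /andP[/= hxb _]; rewrite mul0r addr0 /Wf /Mw /bfn /=.
have hG := Gf_ge0 x; have hG2 := Gf_le x.
have hA : 0 <= ga * (qq / (pp * (qq - pp))).
  apply: mulr_ge0; first exact: ltW.
  by apply: divr_ge0; apply: ltW => //; apply: mulr_gt0.
have hB : 0 <= ga / (qq - pp) * Gf x.
  by apply: mulr_ge0 => //; apply: divr_ge0; apply: ltW.
have hb : 0 <= b%:R :> R by [].
have hx : x%:R <= b%:R :> R by rewrite ler_nat.
set A := ga * (qq / (pp * (qq - pp))) in hA *.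
set M := qq / (qq - pp) in hG2 *.
set B := ga / (qq - pp) * Gf x in hB *.
nra.
Qed.

Lemma W0 : Wf (0, 0)%N = 0.
Proof. by rewrite /Wf /= Gf0 !mulr0 addr0 subr0. Qed.

Lemma hl01 : 0 <= l <= 1. Proof. prep; apply/andP; split; lra. Qed.
Lemma hm01 : 0 <= m <= 1. Proof. prep; apply/andP; split; lra. Qed.

Lemma main_ineq t : t%:R * ga <= (Mw + C1 * t%:R) * EE l m t bfn.
Proof.
have hC := C1_gt0.
have h1 : EE l m t Wf <= Mw * EE l m t bfn + 0 * EE l m t bfn.
  rewrite -EE_lin; apply: (EE_mono hl01 hm01) => z hz /=; exact: W_le hz.
have h2 : \sum_(s < t) EE l m s (fun z => ga * 1 + (- C1) * bfn z) <=
          \sum_(s < t) EE l m s (fun z => Pr l m Wf z - Wf z).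
  apply: ler_sum => s _; apply: (EE_mono hl01 hm01) => z hz.
  rewrite mulr1 mulNr; have := drift hz; rewrite /bfn; lra.
have h3 : \sum_(s < t) EE l m s (fun z => ga * 1 + (- C1) * bfn z) =
          t%:R * ga - C1 * \sum_(s < t) EE l m s bfn.
  rewrite (eq_bigr (fun s : 'I_t => ga - C1 * EE l m s bfn)); last first.
    by move=> s _; rewrite EE_lin /EE iter_const mulr1 mulNr.
  by rewrite sumrB sumr_const card_ord mulr_natl -mulr_sumr.
have h4 := EE_sum_le hl01 hm01 t bfn_mono.
have h5 : C1 * \sum_(s < t) EE l m s bfn <= C1 * (t%:R * EE l m t bfn).
  by apply: ler_wpM2l => //; apply: ltW.
have h6 := EE_tele l m t Wf; rewrite W0 add0r in h6.
rewrite h3 -h6 in h2.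
nra.
Qed.

Lemma EE_ge0 t : 0 <= EE l m t bfn.
Proof.
have := EE_mono hl01 hm01 t (f := fun _ => 0) (g := bfn).
by rewrite /EE iter_const; apply=> z _; rewrite /bfn ler0n.
Qed.

Lemma eventually : exists T, forall t, (T <= t)%N -> ga / (2 * C1) <= EE l m t bfn.
Proof.
have hC := C1_gt0; have hg := ga_gt0.
have hMw : 0 <= Mw / C1.
  have hq := qq_gt0; have hd := d_gt0; have hp := pp_gt0.
  apply: divr_ge0; last exact: ltW.
  apply: addr_ge0; first by apply: divr_ge0; apply: ltW.
  apply: mulr_ge0; first exact: ltW.
  by apply: divr_ge0; apply: ltW => //; apply: mulr_gt0.
exists (Num.Def.archi_bound (Mw / C1)).+1 => t ht.
have hb := archi_boundP hMw.
have ht' : (Num.Def.archi_bound (Mw / C1))%:R + 1 <= t%:R :> R.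
  by rewrite natr1 ler_nat.
have hE := EE_ge0 t; have hI := main_ineq t.
have hM : Mw < C1 * t%:R.
  rewrite -ltr_pdivrMl //; lra.
have ht0 : 0 < t%:R :> R by have := ltr0Sn R (Num.Def.archi_bound (Mw / C1)); lra.
rewrite ler_pdivrMr; last by rewrite mulr_gt0.
have : t%:R * ga <= t%:R * (EE l m t bfn * (2 * C1)) by nra.
by rewrite ler_pM2l.
Qed.

Lemma final_bound (c : R) : 0 <= c ->
  2 * c * m ^+ 2 * (pp + qq) ^+ 2 <= l * pp * qq ^+ 2 ->
  exists T, forall t, (T <= t)%N -> c / (1 - l / m) ^+ 2 <= EE l m t bfn.
Proof.
move=> hc hk; have [T hT] := eventually; exists T => t /hT; apply: le_trans.
have hq := qq_gt0; have hd := d_gt0; have hp := pp_gt0; prep.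
rewrite -subr_le0.
have -> : c / (1 - l / m) ^+ 2 - ga / (2 * C1) =
   (2 * c * m ^+ 2 * (pp + qq) ^+ 2 - l * pp * qq ^+ 2) /
   (2 * (m - l) ^+ 2 * (pp + qq) ^+ 2).
  rewrite /ga /C1 /pp /qq; field.
  rewrite /pp /qq in hp hq hd; nz.
apply: mulr_le0_ge0; first lra.
rewrite invr_ge0; apply: mulr_ge0; last exact: sqr_ge0.
apply: mulr_ge0 => //; exact: sqr_ge0.
Qed.

End Drift.

Lemma slot_prob_ge0 (R : realType) n (l m : R) (w : slot n) : 0 <= l <= 1 -> 0 <= m <= 1 ->
  0 <= slot_prob l m w.
Proof.
move=> hl hm; rewrite /slot_prob; apply: mulr_ge0.
  by case: w.1; move/andP: hl => [? ?]; lra.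
apply: prodr_ge0 => i _; case: (w.2 i); move/andP: hm => [? ?]; lra.
Qed.

Lemma phys_ge n (j0 : 'I_n) s : (arrivals s - decoded s j0 <= phys_queue s)%N.
Proof.
rewrite /phys_queue leq_sub2l //.
have := @bigmin_le _ nat _ (arrivals s) j0 (fun j => decoded s j).
by rewrite minEnat.
Qed.

Lemma queue_ge (R : realType) n (j0 : 'I_n) (l m : R) t : 0 <= l <= 1 -> 0 <= m <= 1 ->
  EE l m t (@bfn R) <= expected_queue n l m t.
Proof.
move=> hl hm; rewrite /EE -(link j0) /expected_queue.
apply: ler_sum => om _; apply: ler_wpM2l.
  by apply: prodr_ge0 => i _; apply: slot_prob_ge0.
by rewrite /bfn /proj /= ler_nat phys_ge.
Qed.

Lemma prod3 (R : realType) (a1 b1 c1 a2 b2 c2 : R) : 0 <= a1 -> 0 <= b1 -> 0 <= c1 ->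
  a1 <= a2 -> b1 <= b2 -> c1 <= c2 -> a1 * b1 * c1 ^+ 2 <= a2 * b2 * c2 ^+ 2.
Proof.
move=> ha hb hc h1 h2 h3; rewrite !expr2.
apply: ler_pM; [by apply: mulr_ge0|by apply: mulr_ge0| |].
  by apply: ler_pM.
by apply: ler_pM.
Qed.

Lemma hk1 (R : realType) (l m : R) : 0 < m -> m < 1 -> m / 2 < l -> l < m ->
  2 * (m ^+ 2 * (1 - m) ^+ 3 / 32) * m ^+ 2 * (l * (1 - m) + m * (1 - l)) ^+ 2 <=
  l * (l * (1 - m)) * (m * (1 - l)) ^+ 2.
Proof.
move=> h0 h1 h2 h3.
have hPQ : (l * (1 - m) + m * (1 - l)) ^+ 2 <= 4.
  rewrite expr2; have hA : 0 <= l * (1 - m) + m * (1 - l) by nra.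
  have hB : l * (1 - m) + m * (1 - l) <= 2 by nra.
  nra.
have hc : 0 <= 2 * (m ^+ 2 * (1 - m) ^+ 3 / 32) * m ^+ 2.
  apply: mulr_ge0; last exact: sqr_ge0.
  apply: mulr_ge0 => //; apply: mulr_ge0; last by rewrite invr_ge0.
  by apply: mulr_ge0; [exact: sqr_ge0|apply: exprn_ge0; lra].
apply: le_trans (_ : 2 * (m ^+ 2 * (1 - m) ^+ 3 / 32) * m ^+ 2 * 4 <= _).
  exact: ler_wpM2l.
have -> : 2 * (m ^+ 2 * (1 - m) ^+ 3 / 32) * m ^+ 2 * 4 =
   (m / 2) * (m * (1 - m) / 2) * (m * (1 - m)) ^+ 2 by field.
apply: prod3; try nra.
Qed.

Lemma hk2 (R : realType) (l m : R) : 0 < l -> l < m -> m < 1 -> (1 + l) * m < 2 * l ->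
  2 * (l ^+ 4 * (1 - l) ^+ 3 / 16) * m ^+ 2 * (l * (1 - m) + m * (1 - l)) ^+ 2 <=
  l * (l * (1 - m)) * (m * (1 - l)) ^+ 2.
Proof.
move=> h0 h1 h2 h3.
have h4 : 2 * m <= 1 + l by nra.
have hPQ : (l * (1 - m) + m * (1 - l)) ^+ 2 <= 4.
  rewrite expr2; have hA : 0 <= l * (1 - m) + m * (1 - l) by nra.
  have hB : l * (1 - m) + m * (1 - l) <= 2 by nra.
  nra.
have hm2 : m ^+ 2 <= 1 by rewrite expr2; nra.
have hc0 : 0 <= 2 * (l ^+ 4 * (1 - l) ^+ 3 / 16).
  apply: mulr_ge0 => //; apply: mulr_ge0; last by rewrite invr_ge0.
  by apply: mulr_ge0; apply: exprn_ge0; lra.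
apply: le_trans (_ : 2 * (l ^+ 4 * (1 - l) ^+ 3 / 16) * 1 * 4 <= _).
  have hmp : m ^+ 2 * (l * (1 - m) + m * (1 - l)) ^+ 2 <= 1 * 4.
    by apply: ler_pM => //; apply: sqr_ge0.
  rewrite -[X in X <= _]mulrA -[X in _ <= X]mulrA; exact: ler_wpM2l.
have -> : 2 * (l ^+ 4 * (1 - l) ^+ 3 / 16) * 1 * 4 =
   l * (l * (1 - l) / 2) * (l * (1 - l)) ^+ 2 by field.
apply: prod3; try nra.
Qed.

Unset Implicit Arguments.
Theorem theorem1 (R : realType) (n : nat) : (0 < n)%N ->
  (forall mu : R, 0 < mu < 1 ->
     exists c : R, 0 < c /\ exists rho0 : R, rho0 < 1 /\
       forall lam : R, 0 < lam -> lam < mu -> rho0 < lam / mu ->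
         exists T : nat, forall t : nat, (T <= t)%N ->
           c / (1 - lam / mu) ^+ 2 <= expected_queue n lam mu t)
  /\
  (forall lam : R, 0 < lam < 1 ->
     exists c : R, 0 < c /\ exists rho0 : R, rho0 < 1 /\
       forall mu : R, lam < mu -> mu < 1 -> rho0 < lam / mu ->
         exists T : nat, forall t : nat, (T <= t)%N ->
           c / (1 - lam / mu) ^+ 2 <= expected_queue n lam mu t).
Proof.
move=> hn; pose j0 : 'I_n := Ordinal hn.
have fin : forall (lam mu c : R), 0 < lam -> lam < mu -> mu < 1 -> 0 <= c ->
    2 * c * mu ^+ 2 * (lam * (1 - mu) + mu * (1 - lam)) ^+ 2 <=
    lam * (lam * (1 - mu)) * (mu * (1 - lam)) ^+ 2 ->
    exists T : nat, forall t : nat, (T <= t)%N ->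
           c / (1 - lam / mu) ^+ 2 <= expected_queue n lam mu t.
  move=> lam mu c h1 h2 h3 hc hk.
  have [T hT] := final_bound h1 h2 h3 hc hk.
  exists T => t ht; apply: le_trans (hT t ht) _.
  apply: (queue_ge j0); apply/andP; split; lra.
split.
  move=> mu /andP[hm0 hm1].
  have hc : 0 < mu ^+ 2 * (1 - mu) ^+ 3 / 32.
    apply: divr_gt0 => //; apply: mulr_gt0; apply: exprn_gt0; lra.
  exists (mu ^+ 2 * (1 - mu) ^+ 3 / 32); split => //.
  exists (1 / 2); split; first lra.
  move=> lam hl0 hlm hr.
  have hl2 : mu / 2 < lam.
    move: hr; rewrite ltr_pdivlMr // => hr; lra.
  apply: fin => //; first exact: ltW.
  exact: hk1.
move=> lam /andP[hl0 hl1].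
have hc : 0 < lam ^+ 4 * (1 - lam) ^+ 3 / 16.
  apply: divr_gt0 => //; apply: mulr_gt0; apply: exprn_gt0; lra.
exists (lam ^+ 4 * (1 - lam) ^+ 3 / 16); split => //.
exists ((1 + lam) / 2); split; first lra.
move=> mu hlm hm1 hr.
have hm0 : 0 < mu by lra.
have hr' : (1 + lam) * mu < 2 * lam.
  move: hr; rewrite ltr_pdivlMr // => hr; lra.
apply: fin => //; first exact: ltW.
exact: hk2.
Qed.
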